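(* Fix $\delta>0$ and an integer $J\ge1$. For each group $g$ let $\mathcal K_{g,\mathrm{fb}}\subseteq\mathcal K_g$ (feedback users) and $\mathcal K_{g,\mathrm{vir}}=(\mathcal K_g\setminus\mathcal K_{g,\mathrm{fb}})\times\{1,\dots,J\}$ (virtual users), with given vectors $\mathbf h_k^{(j)}\in\mathbb C^{MB}$ for $(k,j)\in\mathcal K_{g,\mathrm{vir}}$. Let (R-PF) be the problem: maximize $\alpha$ over $\{\mathbf Q_g\}\in\mathcal Q$, $\{R_g\}$, $\{s_k\}_{k\in\mathcal K_{g,\mathrm{fb}}}$, $\{t_{k,j}\}_{(k,j)\in\mathcal K_{g,\mathrm{vir}}}$, $\alpha$, subject to, for all $g$: $\begin{pmatrix}R_g&\alpha\sqrt{\tau_g|\mathcal K_g|}\\ \alpha\sqrt{\tau_g|\mathcal K_g|}&\sum_{k\in\mathcal K_{g,\mathrm{fb}}}s_k+\frac1J\sum_{(k,j)\in\mathcal K_{g,\mathrm{vir}}}t_{k,j}\end{pmatrix}\succeq\mathbf 0$; $r_k(\{\mathbf Q_\ell\})+\delta^{-1}(1-s_k)\ge R_g$ for $k\in\mathcal K_{g,\mathrm{fb}}$; $r_{k,j}(\{\mathbf Q_\ell\})+\delta^{-1}(1-t_{k,j})\ge R_g$ for $(k,j)\in\mathcal K_{g,\mathrm{vir}}$; $0\le s_k\le1$, $0\le t_{k,j}\le1$. Consider the algorithm that starts from any $\{\tilde{\mathbf Q}_\ell\}\in\mathcal Q$ and at each iteration solves the convex problem obtained from (R-PF) by replacing $r_k$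 with $\bar r_k(\cdot\mid\{\tilde{\mathbf Q}_\ell\})$ and $r_{k,j}$ with $\bar r_{k,j}(\cdot\mid\{\tilde{\mathbf Q}_\ell\})$, then sets $\tilde{\mathbf Q}_\ell$ equal to the obtained $\mathbf Q_\ell$ and repeats. Then every limit point of the iterates $(\{\mathbf Q_g\},\{R_g\},\alpha,\{s_k\},\{t_{k,j}\})$ generated by this algorithm is a stationary point of (R-PF).
   Context: Setting: $B$ BSs with $M$ antennas, powers $P_b\ge0$; users partitioned into groups $\mathcal K_1,\dots,\mathcal K_G$; $\mathcal B_g$ the BSs serving group $g$; weights $\tau_g>0$; $\mathbf h_k\in\mathbb C^{MB}$ the stacked channel of user $k$. $\mathcal Q$: tuples of Hermitian PSD $MB\times MB$ matrices $(\mathbf Q_1,\dots,\mathbf Q_G)$ with $\sum_g\mathrm{tr}(\{\mathbf Q_g\}_{b,b})\le P_b$ for all $b$ ($\{\cdot\}_{b,b'}$ the $(b,b')$-th $M\times M$ block) and $\{\mathbf Q_g\}_{b,b'}=\mathbf 0$ if $b\notin\mathcal B_g$ or $b'\notin\mathcal B_g$. For a vector $\mathbf h$ and user of group $g$ define $\rho_g(\mathbf h;\{\mathbf Q_\ell\})=\log_2\big(1+\frac{\mathrm{tr}(\mathbf Q_g\mathbf h\mathbf h^H)}{\sum_{\ell\ne g}\mathrm{tr}(\mathbf Q_\ell\mathbf h\mathbf h^H)+1}\big)$ and $\bar\rho_g(\mathbf h;\{\mathbf Q_\ell\}\mid\{\tilde{\mathbf Q}_\ell\})=\log_2(1+\sum_{\ell=1}^G\mathrm{tr}(\mathbf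 Q_\ell\mathbf h\mathbf h^H))-\log_2(1+\sum_{\ell\ne g}\mathrm{tr}(\tilde{\mathbf Q}_\ell\mathbf h\mathbf h^H))-\frac{\sum_{\ell\ne g}\mathrm{tr}((\mathbf Q_\ell-\tilde{\mathbf Q}_\ell)\mathbf h\mathbf h^H)}{[1+\sum_{\ell\ne g}\mathrm{tr}(\tilde{\mathbf Q}_\ell\mathbf h\mathbf h^H)]\ln2}$. Then $r_k=\rho_g(\mathbf h_k;\cdot)$, $\bar r_k=\bar\rho_g(\mathbf h_k;\cdot\mid\cdot)$, $r_{k,j}=\rho_g(\mathbf h_k^{(j)};\cdot)$, $\bar r_{k,j}=\bar\rho_g(\mathbf h_k^{(j)};\cdot\mid\cdot)$ for $k\in\mathcal K_g$. A stationary point is a feasible point at which no feasible direction has positive directional derivative of the (max-min reformulated) objective. *)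

(* Defs.v *)
From Stdlib Require Import Reals Lra Arith Bool.
Open Scope R_scope.

Record C := mkC { Cre : R ; Cim : R }.
Definition C0 : C := mkC 0 0.
Definition Cadd (x y : C) : C := mkC (Cre x + Cre y) (Cim x + Cim y).
Definition Csub (x y : C) : C := mkC (Cre x - Cre y) (Cim x - Cim y).
Definition Cmul (x y : C) : C :=
  mkC (Cre x * Cre y - Cim x * Cim y) (Cre x * Cim y + Cim x * Cre y).
Definition Cconj (x : C) : C := mkC (Cre x) (- Cim x).
Definition Cscale (t : R) (x : C) : C := mkC (t * Cre x) (t * Cim x).

Fixpoint sumR (n : nat) (f : nat -> R) : R :=
  match n with O => 0 | S n' => sumR n' f + f n' end.
Fixpoint sumC (n : nat) (f : nat -> C) : C :=
  match n with O => C0 | S n' => Cadd (sumC n' f) (f n') end.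
Fixpoint countn (n : nat) (p : nat -> bool) : nat :=
  match n with O => O | S n' => (countn n' p + (if p n' then 1 else 0))%nat end.

(** Vectors in C^N and N x N matrices, indexed by nat (only indices < N matter). *)
Definition Vec := nat -> C.
Definition Mat := nat -> nat -> C.

(** tr(Q h h^H) = sum_{i,j} Q_{ij} h_j conj(h_i) *)
Definition trQhhC (N : nat) (Q : Mat) (h : Vec) : C :=
  sumC N (fun i => sumC N (fun j => Cmul (Cmul (Q i j) (h j)) (Cconj (h i)))).
(** its real part (it is real for Hermitian Q) *)
Definition trQhh (N : nat) (Q : Mat) (h : Vec) : R := Cre (trQhhC N Q h).

Definition Hermitian (N : nat) (Q : Mat) : Prop :=
  forall i j, (i < N)%nat -> (j < N)%nat -> Q j i = Cconj (Q i j).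

Definition quadform (N : nat) (Q : Mat) (x : Vec) : C :=
  sumC N (fun i => sumC N (fun j => Cmul (Cmul (Cconj (x i)) (Q i j)) (x j))).

Definition HermPSD (N : nat) (Q : Mat) : Prop :=
  Hermitian N Q /\ forall x : Vec, 0 <= Cre (quadform N Q x).

(** 2x2 real symmetric matrix [[a, b],[b, c]] is PSD *)
Definition PSD2 (a b c : R) : Prop :=
  forall x y : R, 0 <= x * x * a + 2 * x * y * b + y * y * c.

Definition log2 (x : R) : R := ln x / ln 2.

Record Sys := mkSys {
  nB : nat ;                    (* number of BSs *)
  nM : nat ;                    (* antennas per BS *)
  nG : nat ;                    (* number of groups *)
  nK : nat ;                    (* number of users, indexed 0..nK-1 *)
  nJ : nat ;                    (* number of virtual samples J *)
  Pw : nat -> R ;               (* power budget P_b *)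
  grp : nat -> nat ;            (* group of user k: k \in K_{grp k} *)
  serv : nat -> nat -> bool ;   (* serv g b = true iff b \in B_g *)
  tau : nat -> R ;
  fb : nat -> bool ;
  hch : nat -> Vec ;            (* h_k for feedback users *)
  hvir : nat -> nat -> Vec ;    (* h_k^(j), j = 1..J, for non-feedback users *)
  delta : R
}.

Section Defs.
Variable sy : Sys.

(** stacked dimension MB; entry (b, m) of a stacked vector has index b*M+m *)
Definition nN : nat := (nM sy * nB sy)%nat.

Definition blk_tr (Q : Mat) (b : nat) : R :=
  sumR (nM sy) (fun m => Cre (Q (b * nM sy + m)%nat (b * nM sy + m)%nat)).

Definition InQset (Q : nat -> Mat) : Prop :=
  (forall g, (g < nG sy)%nat -> HermPSD nN (Q g)) /\
  (forall b, (b < nB sy)%nat -> sumR (nG sy) (fun g => blk_tr (Q g) b) <= Pw sy b) /\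
  (forall g b b', (g < nG sy)%nat -> (b < nB sy)%nat -> (b' < nB sy)%nat ->
     (serv sy g b = false \/ serv sy g b' = false) ->
     forall m m', (m < nM sy)%nat -> (m' < nM sy)%nat ->
       Q g (b * nM sy + m)%nat (b' * nM sy + m')%nat = C0).

Definition interf (Q : nat -> Mat) (g : nat) (h : Vec) : R :=
  sumR (nG sy) (fun l => if Nat.eqb l g then 0 else trQhh nN (Q l) h).
Definition total (Q : nat -> Mat) (h : Vec) : R :=
  sumR (nG sy) (fun l => trQhh nN (Q l) h).

Definition rho (g : nat) (h : Vec) (Q : nat -> Mat) : R :=
  log2 (1 + trQhh nN (Q g) h / (interf Q g h + 1)).

Definition rhobar (g : nat) (h : Vec) (Q Qt : nat -> Mat) : R :=
  log2 (1 + total Q h) - log2 (1 + interf Qt g h)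
  - sumR (nG sy) (fun l => if Nat.eqb l g then 0
                          else trQhh nN (Q l) h - trQhh nN (Qt l) h)
    / ((1 + interf Qt g h) * ln 2).

Definition card_grp (g : nat) : nat := countn (nK sy) (fun k => Nat.eqb (grp sy k) g).

Record Pt := mkPt {
  pQ : nat -> Mat ;
  pR : nat -> R ;
  pS : nat -> R ;
  pT : nat -> nat -> R ;     (* t_{k,j}, k non-feedback, j = 1..J *)
  pA : R
}.

Definition padd (x y : Pt) : Pt :=
  mkPt (fun g i j => Cadd (pQ x g i j) (pQ y g i j))
       (fun g => pR x g + pR y g) (fun k => pS x k + pS y k)
       (fun k j => pT x k j + pT y k j) (pA x + pA y).
Definition pscale (t : R) (x : Pt) : Pt :=
  mkPt (fun g i j => Cscale t (pQ x g i j)) (fun g => t * pR x g)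
       (fun k => t * pS x k) (fun k j => t * pT x k j) (t * pA x).

Definition sum_fb (x : Pt) (g : nat) : R :=
  sumR (nK sy) (fun k => if fb sy k && Nat.eqb (grp sy k) g then pS x k else 0).
Definition sum_vir (x : Pt) (g : nat) : R :=
  sumR (nK sy) (fun k => if negb (fb sy k) && Nat.eqb (grp sy k) g
                        then sumR (nJ sy) (fun j => pT x k (Datatypes.S j)) else 0).

(** Feasible set of (R-PF) with the rate function [rate g h Q] plugged in *)
Definition feas_gen (rate : nat -> Vec -> (nat -> Mat) -> R) (x : Pt) : Prop :=
  InQset (pQ x) /\
  (forall g, (g < nG sy)%nat ->
     PSD2 (pR x g) (pA x * sqrt (tau sy g * INR (card_grp g)))
          (sum_fb x g + / INR (nJ sy) * sum_vir x g)) /\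
  (forall k, (k < nK sy)%nat -> fb sy k = true ->
     rate (grp sy k) (hch sy k) (pQ x) + / delta sy * (1 - pS x k) >= pR x (grp sy k)) /\
  (forall k j, (k < nK sy)%nat -> fb sy k = false -> (1 <= j <= nJ sy)%nat ->
     rate (grp sy k) (hvir sy k j) (pQ x) + / delta sy * (1 - pT x k j) >= pR x (grp sy k)) /\
  (forall k, (k < nK sy)%nat -> fb sy k = true -> 0 <= pS x k <= 1) /\
  (forall k j, (k < nK sy)%nat -> fb sy k = false -> (1 <= j <= nJ sy)%nat ->
     0 <= pT x k j <= 1).

Definition RPF_feas (x : Pt) : Prop := feas_gen rho x.
Definition CVX_feas (Qt : nat -> Mat) (x : Pt) : Prop :=
  feas_gen (fun g h Q => rhobar g h Q Qt) x.
Definition CVX_opt (Qt : nat -> Mat) (x : Pt) : Prop :=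
  CVX_feas Qt x /\ forall y, CVX_feas Qt y -> pA y <= pA x.

Definition objective (x : Pt) : R := pA x.

Definition feasible_dir (x d : Pt) : Prop :=
  exists eps, 0 < eps /\ forall t, 0 < t <= eps -> RPF_feas (padd x (pscale t d)).

Definition is_dirderiv (f : Pt -> R) (x d : Pt) (l : R) : Prop :=
  forall eps, 0 < eps -> exists eta, 0 < eta /\
    forall t, 0 < t < eta -> Rabs ((f (padd x (pscale t d)) - f x) / t - l) < eps.

Definition stationary (x : Pt) : Prop :=
  RPF_feas x /\
  forall d, feasible_dir x d -> forall l, is_dirderiv objective x d l -> l <= 0.

Definition pt_close (x y : Pt) (eps : R) : Prop :=
  (forall g i j, (g < nG sy)%nat -> (i < nN)%nat -> (j < nN)%nat ->
     Rabs (Cre (pQ x g i j) - Cre (pQ y g i j)) < eps /\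
     Rabs (Cim (pQ x g i j) - Cim (pQ y g i j)) < eps) /\
  (forall g, (g < nG sy)%nat -> Rabs (pR x g - pR y g) < eps) /\
  (forall k, (k < nK sy)%nat -> fb sy k = true -> Rabs (pS x k - pS y k) < eps) /\
  (forall k j, (k < nK sy)%nat -> fb sy k = false -> (1 <= j <= nJ sy)%nat ->
     Rabs (pT x k j - pT y k j) < eps) /\
  Rabs (pA x - pA y) < eps.

Definition limit_point (x : nat -> Pt) (xs : Pt) : Prop :=
  forall eps, 0 < eps -> forall n0, exists n, (n0 <= n)%nat /\ pt_close (x n) xs eps.

Definition sys_ok : Prop :=
  0 < delta sy /\ (1 <= nJ sy)%nat /\
  (forall b, (b < nB sy)%nat -> 0 <= Pw sy b) /\
  (forall g, (g < nG sy)%nat -> 0 < tau sy g) /\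
  (forall k, (k < nK sy)%nat -> (grp sy k < nG sy)%nat) /\
  (forall g, (g < nG sy)%nat -> exists k, (k < nK sy)%nat /\ grp sy k = g).

End Defs.

(* Main.v *)
Require Import Defs.
From Stdlib Require Import Reals Lra Lia Psatz.
Open Scope R_scope.

Lemma ln_le_sub1 x : 0 < x -> ln x <= x - 1.
Proof. intro H. pose proof (exp_ineq1_le (ln x)). rewrite exp_ln in H0; lra. Qed.

Lemma sumR_ext n f g : (forall i, (i < n)%nat -> f i = g i) -> sumR n f = sumR n g.
Proof. induction n; simpl; intros; auto. rewrite IHn, H; auto. Qed.

Lemma sumR_le n f g : (forall i, (i < n)%nat -> f i <= g i) -> sumR n f <= sumR n g.
Proof. induction n; simpl; intros; [lra|]. pose proof (H n (Nat.lt_succ_diag_r _)).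
  assert (sumR n f <= sumR n g) by (apply IHn; auto). lra. Qed.

Lemma sumR_0 n : sumR n (fun _ => 0) = 0.
Proof. induction n; simpl; lra. Qed.

Lemma sumR_ge0 n f : (forall i, (i < n)%nat -> 0 <= f i) -> 0 <= sumR n f.
Proof. intro. rewrite <- (sumR_0 n). apply sumR_le; auto. Qed.

Lemma sumR_plus n f g : sumR n (fun i => f i + g i) = sumR n f + sumR n g.
Proof. induction n; simpl; lra. Qed.

Lemma sumR_minus n f g : sumR n (fun i => f i - g i) = sumR n f - sumR n g.
Proof. induction n; simpl; lra. Qed.

Lemma sumR_scal n c f : sumR n (fun i => c * f i) = c * sumR n f.
Proof. induction n; simpl; [lra|]. rewrite IHn; lra. Qed.

Lemma sumR_term n f i : (i < n)%nat -> (forall k, (k < n)%nat -> 0 <= f k) -> f i <= sumR n f.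
Proof. induction n; intros; [lia|]. simpl.
  assert (0 <= sumR n f) by (apply sumR_ge0; auto).
  destruct (Nat.eq_dec i n). subst; lra.
  assert (f i <= sumR n f) by (apply IHn; auto; lia).
  assert (0 <= f n) by auto. lra. Qed.

Lemma sumR_diff_bound n f g c :
  (forall i, (i < n)%nat -> Rabs (f i - g i) <= c) -> Rabs (sumR n f - sumR n g) <= INR n * c.
Proof. induction n; intros; cbn [sumR]. simpl. rewrite Rminus_0_r, Rabs_R0; lra.
  rewrite S_INR.
  assert (Rabs (sumR n f - sumR n g) <= INR n * c) by (apply IHn; auto).
  pose proof (H n (Nat.lt_succ_diag_r _)).
  replace (sumR n f + f n - (sumR n g + g n)) with ((sumR n f - sumR n g) + (f n - g n)) by ring.
  eapply Rle_trans; [apply Rabs_triang|]. lra. Qed.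

Lemma sumR_excl n f g : (g < n)%nat ->
  sumR n (fun l => if Nat.eqb l g then 0 else f l) + f g = sumR n f.
Proof. induction n; intros; [lia|]. simpl.
  destruct (Nat.eq_dec g n).
  - subst. rewrite Nat.eqb_refl.
    rewrite (sumR_ext n _ f). lra. intros. destruct (Nat.eqb_spec i n); [lia|auto].
  - assert (Nat.eqb n g = false) by (apply Nat.eqb_neq; lia). rewrite H0.
    rewrite <- IHn by lia. lra. Qed.

Lemma Cre_sumC n f : Cre (sumC n f) = sumR n (fun i => Cre (f i)).
Proof. induction n; simpl; auto. rewrite IHn; auto. Qed.
Lemma Cim_sumC n f : Cim (sumC n f) = sumR n (fun i => Cim (f i)).
Proof. induction n; simpl; auto. rewrite IHn; auto. Qed.

Lemma closed_ge a : (forall eps, 0 < eps -> exists v, 0 <= v /\ Rabs (v - a) <= eps) -> 0 <= a.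
Proof. intros H. destruct (Rle_or_lt 0 a); auto.
  destruct (H (- a / 2)) as [v [Hv Hva]]. lra.
  revert Hva. unfold Rabs; destruct Rcase_abs; lra. Qed.

Lemma closed_zero a : (forall eps, 0 < eps -> Rabs a <= eps) -> a = 0.
Proof. intros H. destruct (Req_dec a 0); auto.
  pose proof (Rabs_pos_lt a H0). specialize (H (Rabs a / 2) ltac:(lra)). lra. Qed.

Definition lin (N : nat) (Q : Mat) (w : nat -> nat -> Defs.C) : R :=
  sumR N (fun i => sumR N (fun j => Cre (Q i j) * Cre (w i j) - Cim (Q i j) * Cim (w i j))).

Lemma trQhh_lin N Q h : trQhh N Q h = lin N Q (fun i j => Cmul (h j) (Cconj (h i))).
Proof. unfold trQhh, trQhhC, lin. rewrite Cre_sumC. apply sumR_ext; intros.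
  rewrite Cre_sumC. apply sumR_ext; intros. destruct (Q i i0), (h i0), (h i); simpl. ring. Qed.

Lemma quadform_lin N Q x : Cre (quadform N Q x) = lin N Q (fun i j => Cmul (Cconj (x i)) (x j)).
Proof. unfold quadform, lin. rewrite Cre_sumC. apply sumR_ext; intros.
  rewrite Cre_sumC. apply sumR_ext; intros. destruct (Q i i0), (x i0), (x i); simpl. ring. Qed.

Lemma trQhh_qf N Q h : trQhh N Q h = Cre (quadform N Q h).
Proof. rewrite trQhh_lin, quadform_lin. unfold lin. apply sumR_ext; intros.
  apply sumR_ext; intros. destruct (h i0), (h i); simpl. ring. Qed.

Lemma lin_add N Q D t w :
  lin N (fun i j => Cadd (Q i j) (Cscale t (D i j))) w = lin N Q w + t * lin N D w.
Proof. unfold lin. rewrite <- sumR_scal, <- sumR_plus. apply sumR_ext; intros.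
  rewrite <- sumR_scal, <- sumR_plus. apply sumR_ext; intros. simpl. ring. Qed.

Definition Kw (N : nat) (w : nat -> nat -> Defs.C) : R :=
  sumR N (fun i => sumR N (fun j => Rabs (Cre (w i j)) + Rabs (Cim (w i j)))).

Lemma Kw_ge0 N w : 0 <= Kw N w.
Proof. apply sumR_ge0; intros; apply sumR_ge0; intros.
  pose proof (Rabs_pos (Cre (w i i0))); pose proof (Rabs_pos (Cim (w i i0))); lra. Qed.

Lemma lin_close N Q Q' w e :
  (forall i j, (i < N)%nat -> (j < N)%nat ->
    Rabs (Cre (Q i j) - Cre (Q' i j)) <= e /\ Rabs (Cim (Q i j) - Cim (Q' i j)) <= e) ->
  Rabs (lin N Q w - lin N Q' w) <= INR N * (INR N * (e * Kw N w)).
Proof. intros H. unfold lin. apply sumR_diff_bound; intros i Hi.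
  apply sumR_diff_bound; intros j Hj. destruct (H i j Hi Hj) as [H1 H2].
  assert (Rabs (Cre (w i j)) + Rabs (Cim (w i j)) <= Kw N w).
  { unfold Kw. eapply Rle_trans; [|apply (sumR_term N _ i Hi)].
    - apply (sumR_term N (fun j => Rabs (Cre (w i j)) + Rabs (Cim (w i j))) j Hj).
      intros; pose proof (Rabs_pos (Cre (w i k))); pose proof (Rabs_pos (Cim (w i k))); lra.
    - intros; apply sumR_ge0; intros.
      pose proof (Rabs_pos (Cre (w k i0))); pose proof (Rabs_pos (Cim (w k i0))); lra. }
  replace (Cre (Q i j) * Cre (w i j) - Cim (Q i j) * Cim (w i j) -
     (Cre (Q' i j) * Cre (w i j) - Cim (Q' i j) * Cim (w i j))) with
    ((Cre (Q i j) - Cre (Q' i j)) * Cre (w i j) - (Cim (Q i j) - Cim (Q' i j)) * Cim (w i j)) by ring.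
  eapply Rle_trans; [apply Rabs_triang|]. rewrite Rabs_Ropp, !Rabs_mult.
  assert (0 <= e) by (pose proof (Rabs_pos (Cre (Q i j) - Cre (Q' i j))); lra).
  pose proof (Rabs_pos (Cre (w i j))); pose proof (Rabs_pos (Cim (w i j))).
  pose proof (Rabs_pos (Cre (Q i j) - Cre (Q' i j))); pose proof (Rabs_pos (Cim (Q i j) - Cim (Q' i j))).
  nra. Qed.

Lemma ln_diff_le a b : 0 < a -> 0 < b -> ln a - ln b <= (a - b) / b.
Proof. intros Ha Hb. assert (ln a - ln b = ln (a * / b)).
  { rewrite ln_mult, ln_Rinv; try lra. apply Rinv_0_lt_compat; auto. }
  rewrite H. eapply Rle_trans. apply ln_le_sub1. apply Rmult_lt_0_compat; auto. apply Rinv_0_lt_compat; auto.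
  right. field. lra. Qed.

Lemma ln2_pos : 0 < ln 2.
Proof. pose proof ln_lt_2. lra. Qed.

Lemma gap_real u v : 0 <= u -> 0 <= v ->
  0 <= ln (1 + v) - ln (1 + u) + (u - v) / (1 + v) <= (u - v) ^ 2.
Proof. intros Hu Hv. pose proof (ln_diff_le (1+u) (1+v) ltac:(lra) ltac:(lra)).
  pose proof (ln_diff_le (1+v) (1+u) ltac:(lra) ltac:(lra)). split.
  - replace (1 + u - (1 + v)) with (u - v) in H by ring. lra.
  - assert ((1 + v - (1 + u)) / (1 + u) + (u - v) / (1 + v) <= (u - v) ^ 2).
    { replace ((1 + v - (1 + u)) / (1 + u) + (u - v) / (1 + v)) with
        ((u - v) ^ 2 / ((1 + u) * (1 + v))) by (field; lra).
      assert (Hp : 0 < (1+u)*(1+v)) by nra.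
      apply Rmult_le_reg_r with ((1+u)*(1+v)). nra.
      unfold Rdiv. rewrite Rmult_assoc, Rinv_l by (apply Rgt_not_eq, Rlt_gt; exact Hp). pose proof (pow2_ge_0 (u - v)).
      assert (0 <= (u-v)^2 * (u + v + u*v)) by (apply Rmult_le_pos; nra). nra. }
    lra. Qed.

Lemma ln_abs_diff a b : 0 <= a -> 0 <= b -> Rabs (ln (1 + a) - ln (1 + b)) <= Rabs (a - b).
Proof. intros. pose proof (ln_diff_le (1+a) (1+b) ltac:(lra) ltac:(lra)).
  pose proof (ln_diff_le (1+b) (1+a) ltac:(lra) ltac:(lra)).
  assert ((1 + a - (1 + b)) / (1 + b) <= Rabs (a - b)).
  { unfold Rdiv. replace (1 + a - (1 + b)) with (a - b) by ring.
    destruct (Rle_or_lt 0 (a - b)).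
    - rewrite Rabs_right by lra. rewrite <- (Rmult_1_r (a - b)) at 2.
      apply Rmult_le_compat_l; auto. rewrite <- Rinv_1. apply Rinv_le_contravar; lra.
    - rewrite Rabs_left by lra. assert (0 < / (1 + b)) by (apply Rinv_0_lt_compat; lra). nra. }
  assert ((1 + b - (1 + a)) / (1 + a) <= Rabs (a - b)).
  { unfold Rdiv. replace (1 + b - (1 + a)) with (b - a) by ring.
    destruct (Rle_or_lt 0 (b - a)).
    - rewrite Rabs_left1 by lra. replace (- (a - b)) with ((b - a) * 1) by ring.
      apply Rmult_le_compat_l; auto. rewrite <- Rinv_1. apply Rinv_le_contravar; lra.
    - rewrite Rabs_right by lra. assert (0 < / (1 + a)) by (apply Rinv_0_lt_compat; lra). nra. }
  unfold Rabs at 1; destruct Rcase_abs; lra. Qed.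

Section Rates.
Variable sy : Sys.

Lemma interf_ge0 Q g h : (forall l, (l < nG sy)%nat -> 0 <= trQhh (nN sy) (Q l) h) -> 0 <= interf sy Q g h.
Proof. intros. apply sumR_ge0; intros. destruct Nat.eqb; auto; lra. Qed.

Lemma total_split Q g h : (g < nG sy)%nat -> total sy Q h = interf sy Q g h + trQhh (nN sy) (Q g) h.
Proof. intros. unfold total, interf. rewrite <- (sumR_excl _ (fun l => trQhh (nN sy) (Q l) h) g); auto. Qed.

Definition nonneg_tr (Q : nat -> Mat) (h : Vec) := forall l, (l < nG sy)%nat -> 0 <= trQhh (nN sy) (Q l) h.

Lemma rho_split g h Q : (g < nG sy)%nat -> nonneg_tr Q h ->
  rho sy g h Q = log2 (1 + total sy Q h) - log2 (1 + interf sy Q g h).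
Proof. intros Hg HQ. pose proof (interf_ge0 Q g h HQ). pose proof (HQ g Hg).
  unfold rho, log2. rewrite (total_split Q g h Hg).
  replace (1 + trQhh (nN sy) (Q g) h / (interf sy Q g h + 1)) with
    ((1 + (interf sy Q g h + trQhh (nN sy) (Q g) h)) * / (1 + interf sy Q g h)) by (field; lra).
  rewrite ln_mult, ln_Rinv; try lra. apply Rinv_0_lt_compat; lra. Qed.

Lemma rho_ge0 g h Q : (g < nG sy)%nat -> nonneg_tr Q h -> 0 <= rho sy g h Q.
Proof. intros Hg HQ. pose proof (interf_ge0 Q g h HQ). pose proof (HQ g Hg).
  unfold rho, log2. pose proof ln2_pos. apply Rmult_le_pos; [|left; apply Rinv_0_lt_compat; lra].
  rewrite <- ln_1. destruct (Req_dec (trQhh (nN sy) (Q g) h) 0) as [E|E].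
  - rewrite E. right. f_equal. field. lra.
  - left. apply ln_increasing. lra.
    assert (0 < trQhh (nN sy) (Q g) h / (interf sy Q g h + 1)).
    { apply Rdiv_lt_0_compat; lra. } lra. Qed.

Lemma rate_gap g h Q Qt : (g < nG sy)%nat -> nonneg_tr Q h -> nonneg_tr Qt h ->
  0 <= rho sy g h Q - rhobar sy g h Q Qt <= (interf sy Q g h - interf sy Qt g h) ^ 2 / ln 2.
Proof. intros Hg HQ HQt. rewrite rho_split; auto. unfold rhobar.
  assert (sumR (nG sy) (fun l => if Nat.eqb l g then 0
                          else trQhh (nN sy) (Q l) h - trQhh (nN sy) (Qt l) h) =
          interf sy Q g h - interf sy Qt g h).
  { unfold interf. rewrite <- sumR_minus. apply sumR_ext; intros. destruct Nat.eqb; ring. }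
  rewrite H. pose proof (interf_ge0 Q g h HQ). pose proof (interf_ge0 Qt g h HQt).
  pose proof (gap_real _ _ H0 H1). pose proof ln2_pos.
  replace (log2 (1 + total sy Q h) - log2 (1 + interf sy Q g h) -
   (log2 (1 + total sy Q h) - log2 (1 + interf sy Qt g h) -
    (interf sy Q g h - interf sy Qt g h) / ((1 + interf sy Qt g h) * ln 2)))
   with ((ln (1 + interf sy Qt g h) - ln (1 + interf sy Q g h) +
      (interf sy Q g h - interf sy Qt g h) / (1 + interf sy Qt g h)) / ln 2)
   by (unfold log2; field; lra).
  split.
  - apply Rmult_le_pos; [lra|left; apply Rinv_0_lt_compat; lra].
  - unfold Rdiv at 1 3. apply Rmult_le_compat_r; [left; apply Rinv_0_lt_compat; lra|lra]. Qed.

End Rates.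

Section P4.
Variable sy : Sys.

Lemma rho_close g h Q Q' e : (g < nG sy)%nat -> nonneg_tr sy Q h -> nonneg_tr sy Q' h ->
  (forall l, (l < nG sy)%nat -> Rabs (trQhh (nN sy) (Q l) h - trQhh (nN sy) (Q' l) h) <= e) ->
  Rabs (rho sy g h Q - rho sy g h Q') <= 2 * (INR (nG sy) * e) / ln 2.
Proof. intros Hg HQ HQ' He. assert (e0 : 0 <= e) by (pose proof (He g Hg); pose proof (Rabs_pos (trQhh (nN sy) (Q g) h - trQhh (nN sy) (Q' g) h)); lra).
  rewrite !rho_split; auto. unfold log2.
  assert (HT : Rabs (total sy Q h - total sy Q' h) <= INR (nG sy) * e) by (apply sumR_diff_bound; auto).
  assert (HI : Rabs (interf sy Q g h - interf sy Q' g h) <= INR (nG sy) * e).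
  { apply sumR_diff_bound; intros. destruct Nat.eqb; auto. rewrite Rminus_0_r, Rabs_R0; auto. }
  assert (0 <= total sy Q h) by (unfold total; apply sumR_ge0; auto).
  assert (0 <= total sy Q' h) by (unfold total; apply sumR_ge0; auto).
  pose proof (interf_ge0 sy Q g h HQ). pose proof (interf_ge0 sy Q' g h HQ').
  pose proof (ln_abs_diff _ _ H H0). pose proof (ln_abs_diff _ _ H1 H2).
  pose proof ln2_pos.
  replace (ln (1 + total sy Q h) / ln 2 - ln (1 + interf sy Q g h) / ln 2 -
    (ln (1 + total sy Q' h) / ln 2 - ln (1 + interf sy Q' g h) / ln 2)) with
    (((ln (1 + total sy Q h) - ln (1 + total sy Q' h)) - (ln (1 + interf sy Q g h) - ln (1 + interf sy Q' g h))) / ln 2)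
    by (field; lra).
  unfold Rdiv. rewrite Rabs_mult, (Rabs_right (/ ln 2)) by (left; apply Rinv_0_lt_compat; lra).
  apply Rmult_le_compat_r; [left; apply Rinv_0_lt_compat; lra|].
  eapply Rle_trans; [apply Rabs_triang|]. rewrite Rabs_Ropp. lra. Qed.

Lemma Qset_nonneg Q h : InQset sy Q -> nonneg_tr sy Q h.
Proof. intros [H _] l Hl. rewrite trQhh_qf. apply (proj2 (H l Hl)). Qed.

Lemma feas_mono (r1 r2 : nat -> Vec -> (nat -> Mat) -> R) p : sys_ok sy ->
  (forall g h, (g < nG sy)%nat -> r2 g h (pQ p) <= r1 g h (pQ p)) ->
  feas_gen sy r2 p -> feas_gen sy r1 p.
Proof. intros Hs Hr [F1 [F2 [F3 [F4 [F5 F6]]]]].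
  destruct Hs as [_ [_ [_ [_ [Hgrp _]]]]].
  refine (conj F1 (conj F2 (conj _ (conj _ (conj F5 F6))))).
  - intros k Hk Hf. specialize (F3 k Hk Hf). pose proof (Hr (grp sy k) (hch sy k) (Hgrp k Hk)). lra.
  - intros k j Hk Hf Hj. specialize (F4 k j Hk Hf Hj). pose proof (Hr (grp sy k) (hvir sy k j) (Hgrp k Hk)). lra.
Qed.

Lemma cvx_to_rpf Qt p : sys_ok sy -> InQset sy Qt -> CVX_feas sy Qt p -> RPF_feas sy p.
Proof. intros Hs HQt Hf. apply (feas_mono (rho sy) (fun g h Q => rhobar sy g h Q Qt) p Hs); auto. intros.
  pose proof (rate_gap sy g h (pQ p) Qt H (Qset_nonneg _ _ (proj1 Hf)) (Qset_nonneg _ _ HQt)). lra. Qed.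

Lemma rpf_to_cvx p : sys_ok sy -> RPF_feas sy p -> CVX_feas sy (pQ p) p.
Proof. intros Hs Hf. apply (feas_mono (fun g h Q => rhobar sy g h Q (pQ p)) (rho sy) p Hs); auto. intros.
  pose proof (rate_gap sy g h (pQ p) (pQ p) H (Qset_nonneg _ _ (proj1 Hf)) (Qset_nonneg _ _ (proj1 Hf))).
  replace ((interf sy (pQ p) g h - interf sy (pQ p) g h) ^ 2 / ln 2) with 0 in H0 by (unfold Rdiv; ring).
  lra. Qed.

End P4.

Lemma closed_geK a K : 0 <= K ->
  (forall e, 0 < e -> exists v, 0 <= v /\ Rabs (v - a) <= K * e) -> 0 <= a.
Proof. intros HK H. apply closed_ge. intros eps Heps.
  destruct (H (eps / (K + 1))) as [v [Hv Hva]]. apply Rdiv_lt_0_compat; lra.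
  exists v; split; auto. eapply Rle_trans; [exact Hva|].
  replace eps with ((K+1) * (eps / (K+1))) at 2 by (field; lra).
  apply Rmult_le_compat_r. left; apply Rdiv_lt_0_compat; lra. lra. Qed.

Lemma closed_zeroK a K : 0 <= K -> (forall e, 0 < e -> Rabs a <= K * e) -> a = 0.
Proof. intros HK H. apply closed_zero. intros eps Heps.
  eapply Rle_trans; [apply (H (eps / (K + 1))); apply Rdiv_lt_0_compat; lra|].
  replace eps with ((K+1) * (eps / (K+1))) at 2 by (field; lra).
  apply Rmult_le_compat_r. left; apply Rdiv_lt_0_compat; lra. lra. Qed.

Lemma C_eq (a b : Defs.C) : Cre a = Cre b -> Cim a = Cim b -> a = b.
Proof. destruct a, b; simpl; intros; subst; auto. Qed.

Lemma abs_lin3 a1 a2 a3 d1 d2 d3 e1 e2 e3 :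
  Rabs d1 <= e1 -> Rabs d2 <= e2 -> Rabs d3 <= e3 ->
  Rabs (a1 * d1 + a2 * d2 + a3 * d3) <= Rabs a1 * e1 + Rabs a2 * e2 + Rabs a3 * e3.
Proof. intros. eapply Rle_trans; [apply Rabs_triang|].
  eapply Rle_trans; [apply Rplus_le_compat_r; apply Rabs_triang|]. rewrite !Rabs_mult.
  pose proof (Rabs_pos a1); pose proof (Rabs_pos a2); pose proof (Rabs_pos a3).
  pose proof (Rmult_le_compat_l _ _ _ H2 H). pose proof (Rmult_le_compat_l _ _ _ H3 H0).
  pose proof (Rmult_le_compat_l _ _ _ H4 H1). lra. Qed.

Lemma abs_le_e d e : Rabs d < e -> Rabs d <= e.
Proof. lra. Qed.

Section P5.
Variable sy : Sys.

Definition hw (h : Vec) := fun i j => Cmul (h j) (Cconj (h i)).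

Lemma tr_close Q Q' h e : (forall i j, (i < nN sy)%nat -> (j < nN sy)%nat ->
    Rabs (Cre (Q i j) - Cre (Q' i j)) <= e /\ Rabs (Cim (Q i j) - Cim (Q' i j)) <= e) ->
  Rabs (trQhh (nN sy) Q h - trQhh (nN sy) Q' h) <= INR (nN sy) * (INR (nN sy) * (e * Kw (nN sy) (hw h))).
Proof. intros. rewrite !trQhh_lin. apply lin_close; auto. Qed.

Lemma closeQ p q e g : pt_close sy p q e -> (g < nG sy)%nat ->
  forall i j, (i < nN sy)%nat -> (j < nN sy)%nat ->
    Rabs (Cre (pQ p g i j) - Cre (pQ q g i j)) <= e /\ Rabs (Cim (pQ p g i j) - Cim (pQ q g i j)) <= e.
Proof. intros [H _] Hg i j Hi Hj. destruct (H g i j Hg Hi Hj); split; lra. Qed.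

Lemma close_pos p q e : pt_close sy p q e -> 0 < e.
Proof. intros [_ [_ [_ [_ H]]]]. pose proof (Rabs_pos (pA p - pA q)). lra. Qed.

Lemma sum_fb_close p q e g : pt_close sy p q e ->
  Rabs (sum_fb sy p g - sum_fb sy q g) <= INR (nK sy) * e.
Proof. intros Hc. pose proof (close_pos _ _ _ Hc). destruct Hc as [_ [_ [Hs _]]].
  apply sumR_diff_bound. intros k Hk.
  destruct (fb sy k) eqn:E; simpl; [destruct Nat.eqb|];
   try (rewrite Rminus_0_r, Rabs_R0; lra). apply abs_le_e, Hs; auto. Qed.

Lemma sum_vir_close p q e g : pt_close sy p q e ->
  Rabs (sum_vir sy p g - sum_vir sy q g) <= INR (nK sy) * (INR (nJ sy) * e).
Proof. intros Hc. pose proof (close_pos _ _ _ Hc). destruct Hc as [_ [_ [_ [Hs _]]]].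
  apply sumR_diff_bound. intros k Hk.
  destruct (fb sy k) eqn:E; simpl; [|destruct Nat.eqb];
   try (rewrite Rminus_0_r, Rabs_R0; pose proof (pos_INR (nJ sy)); nra).
  apply sumR_diff_bound. intros j Hj. apply abs_le_e, Hs; auto; lia. Qed.

End P5.

Lemma abs_between u e : Rabs u <= e -> -e <= u <= e.
Proof. unfold Rabs; destruct Rcase_abs; lra. Qed.
Lemma between_abs u e : -e <= u <= e -> Rabs u <= e.
Proof. unfold Rabs; destruct Rcase_abs; lra. Qed.

Section P6.
Variable sy : Sys.
Variable xs : Pt.
Hypothesis Hs : sys_ok sy.
Hypothesis Hlim : forall e, 0 < e -> exists p, RPF_feas sy p /\ pt_close sy p xs e.

Lemma lim_Qset : InQset sy (pQ xs).
Proof. split; [|split].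
  - intros g Hg. split.
    + intros i j Hi Hj. apply C_eq; simpl.
      * apply Rminus_diag_uniq. apply (closed_zeroK _ 2); [lra|]. intros e He.
        destruct (Hlim e He) as [p [Fp Cp]].
        destruct (proj1 (proj1 Fp) g Hg) as [Hh _]. pose proof (f_equal Cre (Hh i j Hi Hj)) as E. simpl in E.
        destruct (closeQ sy _ _ _ g Cp Hg i j Hi Hj) as [A1 _].
        destruct (closeQ sy _ _ _ g Cp Hg j i Hj Hi) as [A2 _].
        apply abs_between in A1. apply abs_between in A2. apply between_abs. lra.
      * apply Rplus_opp_r_uniq. apply (closed_zeroK _ 2); [lra|]. intros e He.
        destruct (Hlim e He) as [p [Fp Cp]].
        destruct (proj1 (proj1 Fp) g Hg) as [Hh _]. pose proof (f_equal Cim (Hh i j Hi Hj)) as E. simpl in E.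
        destruct (closeQ sy _ _ _ g Cp Hg i j Hi Hj) as [_ A1].
        destruct (closeQ sy _ _ _ g Cp Hg j i Hj Hi) as [_ A2].
        apply abs_between in A1. apply abs_between in A2. apply between_abs. lra.
    + intros v. rewrite quadform_lin.
      set (w := fun i j => Cmul (Cconj (v i)) (v j)).
      apply (closed_geK _ (INR (nN sy) * INR (nN sy) * Kw (nN sy) w)).
      { pose proof (pos_INR (nN sy)); pose proof (Kw_ge0 (nN sy) w). repeat apply Rmult_le_pos; auto. }
      intros e He. destruct (Hlim e He) as [p [Fp Cp]].
      exists (lin (nN sy) (pQ p g) w). split.
      { unfold w. rewrite <- quadform_lin. apply (proj2 (proj1 (proj1 Fp) g Hg)). }
      replace (INR (nN sy) * INR (nN sy) * Kw (nN sy) w * e) with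
         (INR (nN sy) * (INR (nN sy) * (e * Kw (nN sy) w))) by ring.
      apply lin_close. apply (closeQ sy _ _ _ g Cp Hg).
  - intros b Hb. apply Rge_le, Rminus_ge, Rle_ge.
    apply (closed_geK _ (INR (nG sy) * INR (nM sy))).
    { apply Rmult_le_pos; apply pos_INR. }
    intros e He. destruct (Hlim e He) as [p [Fp Cp]].
    exists (Pw sy b - sumR (nG sy) (fun g => blk_tr sy (pQ p g) b)). split.
    { pose proof (proj1 (proj2 (proj1 Fp)) b Hb). lra. }
    replace (Pw sy b - sumR (nG sy) (fun g => blk_tr sy (pQ p g) b) -
      (Pw sy b - sumR (nG sy) (fun g => blk_tr sy (pQ xs g) b))) with
      (- (sumR (nG sy) (fun g => blk_tr sy (pQ p g) b) - sumR (nG sy) (fun g => blk_tr sy (pQ xs g) b))) by ring.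
    rewrite Rabs_Ropp. rewrite Rmult_assoc. apply sumR_diff_bound. intros g Hg.
    apply sumR_diff_bound. intros m Hm.
    assert (Hi : (b * nM sy + m < nN sy)%nat) by (unfold nN; nia).
    apply (closeQ sy _ _ _ g Cp Hg _ _ Hi Hi).
  - intros g b b' Hg Hb Hb' Hor m m' Hm Hm'.
    assert (Hi : (b * nM sy + m < nN sy)%nat) by (unfold nN; nia).
    assert (Hi' : (b' * nM sy + m' < nN sy)%nat) by (unfold nN; nia).
    apply C_eq; simpl; apply (closed_zeroK _ 1); try lra; intros e He;
    destruct (Hlim e He) as [p [Fp Cp]];
    pose proof (proj2 (proj2 (proj1 Fp)) g b b' Hg Hb Hb' Hor m m' Hm Hm') as E;
    destruct (closeQ sy _ _ _ g Cp Hg _ _ Hi Hi') as [A1 A2];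
    rewrite E in A1, A2; simpl in A1, A2;
    apply abs_between in A1; apply abs_between in A2; apply between_abs; lra.
Qed.

Lemma lim_rate (h : Vec) (g : nat) (sel : Pt -> R) : (g < nG sy)%nat ->
  (forall e, 0 < e -> exists p, RPF_feas sy p /\ pt_close sy p xs e /\
      Rabs (sel p - sel xs) <= e /\ Rabs (pR p g - pR xs g) <= e /\
      rho sy g h (pQ p) + / delta sy * (1 - sel p) >= pR p g) ->
  rho sy g h (pQ xs) + / delta sy * (1 - sel xs) >= pR xs g.
Proof. intros Hg H. apply Rle_ge, Rge_le, Rminus_ge, Rle_ge.
  pose proof Hs as [Hd _]. pose proof ln2_pos.
  pose proof (Kw_ge0 (nN sy) (hw h)). pose proof (pos_INR (nN sy)). pose proof (pos_INR (nG sy)).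
  assert (0 <= / delta sy) by (left; apply Rinv_0_lt_compat; auto).
  set (KK := INR (nN sy) * (INR (nN sy) * Kw (nN sy) (hw h))).
  assert (0 <= KK) by (unfold KK; repeat apply Rmult_le_pos; auto).
  apply (closed_geK _ (2 * (INR (nG sy) * KK) / ln 2 + / delta sy + 1)).
  { assert (0 <= 2 * (INR (nG sy) * KK) / ln 2).
    { apply Rmult_le_pos; [|left; apply Rinv_0_lt_compat; lra]. nra. } lra. }
  intros e He. destruct (H e He) as [p [Fp [Cp [S1 [S2 Rp]]]]].
  exists (rho sy g h (pQ p) + / delta sy * (1 - sel p) - pR p g). split; [lra|].
  assert (R1 : Rabs (rho sy g h (pQ p) - rho sy g h (pQ xs)) <= 2 * (INR (nG sy) * (KK * e)) / ln 2).
  { apply rho_close; auto. apply Qset_nonneg, (proj1 Fp). apply Qset_nonneg, lim_Qset.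
    intros l Hl. unfold KK. replace (INR (nN sy) * (INR (nN sy) * Kw (nN sy) (hw h)) * e) with
      (INR (nN sy) * (INR (nN sy) * (e * Kw (nN sy) (hw h)))) by ring.
    apply tr_close. apply (closeQ sy _ _ _ l Cp Hl). }
  replace (rho sy g h (pQ p) + / delta sy * (1 - sel p) - pR p g -
    (rho sy g h (pQ xs) + / delta sy * (1 - sel xs) - pR xs g)) with
    (1 * (rho sy g h (pQ p) - rho sy g h (pQ xs)) + (- / delta sy) * (sel p - sel xs) + (-1) * (pR p g - pR xs g))
    by ring.
  eapply Rle_trans; [apply (abs_lin3 _ _ _ _ _ _ _ _ _ R1 S1 S2)|].
  replace (Rabs (- / delta sy)) with (/ delta sy) by (rewrite Rabs_Ropp, Rabs_right; lra).
  replace (Rabs (-1)) with 1 by (unfold Rabs; destruct Rcase_abs; lra). rewrite Rabs_R1.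
  right. unfold Rdiv. ring. Qed.

Lemma lim_feas : RPF_feas sy xs.
Proof. pose proof Hs as [Hd [HJ [_ [_ [Hgrp _]]]]].
  split; [apply lim_Qset|]. split; [|split; [|split; [|split]]].
  - intros g Hg u v.
    set (s0 := sqrt (tau sy g * INR (card_grp sy g))).
    assert (0 < INR (nJ sy)) by (apply lt_0_INR; lia).
    assert (0 <= / INR (nJ sy)) by (left; apply Rinv_0_lt_compat; auto).
    pose proof (pos_INR (nK sy)).
    set (K := Rabs (u * u) + Rabs (2 * u * v * s0) + Rabs (v * v) * (INR (nK sy) + / INR (nJ sy) * (INR (nK sy) * INR (nJ sy)))).
    apply (closed_geK _ K).
    { unfold K. pose proof (Rabs_pos (u*u)). pose proof (Rabs_pos (2*u*v*s0)). pose proof (Rabs_pos (v*v)).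
      assert (0 <= / INR (nJ sy) * (INR (nK sy) * INR (nJ sy))) by (apply Rmult_le_pos; nra). nra. }
    intros e He. destruct (Hlim e He) as [p [Fp Cp]].
    exists (u * u * pR p g + 2 * u * v * (pA p * s0) + v * v * (sum_fb sy p g + / INR (nJ sy) * sum_vir sy p g)).
    split. { apply (proj1 (proj2 Fp) g Hg). }
    pose proof (close_pos _ _ _ _ Cp).
    assert (A1 : Rabs (pR p g - pR xs g) <= e) by (apply abs_le_e, (proj1 (proj2 Cp)); auto).
    assert (A2 : Rabs (pA p - pA xs) <= e) by (apply abs_le_e, (proj2 (proj2 (proj2 (proj2 Cp))))).
    assert (A3 : Rabs ((sum_fb sy p g + / INR (nJ sy) * sum_vir sy p g) - (sum_fb sy xs g + / INR (nJ sy) * sum_vir sy xs g))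
       <= INR (nK sy) * e + / INR (nJ sy) * (INR (nK sy) * (INR (nJ sy) * e))).
    { pose proof (sum_fb_close sy _ _ _ g Cp). pose proof (sum_vir_close sy _ _ _ g Cp).
      apply abs_between in H3. apply abs_between in H4. apply between_abs.
      assert (forall z, -(INR (nK sy) * (INR (nJ sy) * e)) <= z <= INR (nK sy) * (INR (nJ sy) * e) ->
        - (/ INR (nJ sy) * (INR (nK sy) * (INR (nJ sy) * e))) <= / INR (nJ sy) * z <= / INR (nJ sy) * (INR (nK sy) * (INR (nJ sy) * e))).
      { intros z Hz. split; nra. }
      specialize (H5 _ H4). lra. }
    replace (u * u * pR p g + 2 * u * v * (pA p * s0) + v * v * (sum_fb sy p g + / INR (nJ sy) * sum_vir sy p g) -
      (u * u * pR xs g + 2 * u * v * (pA xs * s0) + v * v * (sum_fb sy xs g + / INR (nJ sy) * sum_vir sy xs g))) with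
      ((u*u) * (pR p g - pR xs g) + (2 * u * v * s0) * (pA p - pA xs) + (v * v) *
        ((sum_fb sy p g + / INR (nJ sy) * sum_vir sy p g) - (sum_fb sy xs g + / INR (nJ sy) * sum_vir sy xs g))) by ring.
    eapply Rle_trans; [apply (abs_lin3 _ _ _ _ _ _ _ _ _ A1 A2 A3)|]. right. unfold K. ring.
  - intros k Hk Hf. apply (lim_rate _ _ (fun p => pS p k) (Hgrp k Hk)). intros e He.
    destruct (Hlim e He) as [p [Fp Cp]]. exists p. split; auto. split; auto.
    destruct Cp as [_ [C2 [C3 _]]]. split; [apply abs_le_e; auto|split; [apply abs_le_e; auto|]].
    apply (proj1 (proj2 (proj2 Fp)) k Hk Hf).
  - intros k j Hk Hf Hj. apply (lim_rate _ _ (fun p => pT p k j) (Hgrp k Hk)). intros e He.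
    destruct (Hlim e He) as [p [Fp Cp]]. exists p. split; auto. split; auto.
    destruct Cp as [_ [C2 [_ [C4 _]]]]. split; [apply abs_le_e; auto|split; [apply abs_le_e; auto|]].
    apply (proj1 (proj2 (proj2 (proj2 Fp))) k j Hk Hf Hj).
  - intros k Hk Hf. split.
    + apply (closed_geK _ 1); [lra|]. intros e He. destruct (Hlim e He) as [p [Fp Cp]].
      exists (pS p k). split. apply (proj1 (proj2 (proj2 (proj2 (proj2 Fp)))) k Hk Hf).
      rewrite Rmult_1_l. apply abs_le_e, (proj1 (proj2 (proj2 Cp))); auto.
    + apply Rge_le, Rminus_ge, Rle_ge. apply (closed_geK _ 1); [lra|]. intros e He. destruct (Hlim e He) as [p [Fp Cp]].
      exists (1 - pS p k). split. pose proof (proj1 (proj2 (proj2 (proj2 (proj2 Fp)))) k Hk Hf). lra.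
      replace (1 - pS p k - (1 - pS xs k)) with (- (pS p k - pS xs k)) by ring. rewrite Rabs_Ropp.
      rewrite Rmult_1_l. apply abs_le_e, (proj1 (proj2 (proj2 Cp))); auto.
  - intros k j Hk Hf Hj. split.
    + apply (closed_geK _ 1); [lra|]. intros e He. destruct (Hlim e He) as [p [Fp Cp]].
      exists (pT p k j). split. apply (proj2 (proj2 (proj2 (proj2 (proj2 Fp)))) k j Hk Hf Hj).
      rewrite Rmult_1_l. apply abs_le_e, (proj1 (proj2 (proj2 (proj2 Cp)))); auto.
    + apply Rge_le, Rminus_ge, Rle_ge. apply (closed_geK _ 1); [lra|]. intros e He. destruct (Hlim e He) as [p [Fp Cp]].
      exists (1 - pT p k j). split. pose proof (proj2 (proj2 (proj2 (proj2 (proj2 Fp)))) k j Hk Hf Hj). lra.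
      replace (1 - pT p k j - (1 - pT xs k j)) with (- (pT p k j - pT xs k j)) by ring. rewrite Rabs_Ropp.
      rewrite Rmult_1_l. apply abs_le_e, (proj1 (proj2 (proj2 (proj2 Cp)))); auto.
Qed.

End P6.

Section P7.
Variable sy : Sys.

Definition Sg (phi : nat -> Vec -> R) : R :=
  sumR (nK sy) (fun k => if fb sy k then phi (grp sy k) (hch sy k)
                         else sumR (nJ sy) (fun j => phi (grp sy k) (hvir sy k (S j)))).

Lemma Sg_fb phi k : (forall g h, 0 <= phi g h) -> (k < nK sy)%nat -> fb sy k = true ->
  phi (grp sy k) (hch sy k) <= Sg phi.
Proof. intros Hp Hk Hf. unfold Sg.
  eapply Rle_trans; [|apply (sumR_term _ _ k Hk)]; cbv beta. rewrite Hf; lra.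
  intros k' Hk'. destruct (fb sy k'); [auto|apply sumR_ge0; auto]. Qed.

Lemma Sg_vir phi k j : (forall g h, 0 <= phi g h) -> (k < nK sy)%nat -> fb sy k = false ->
  (1 <= j <= nJ sy)%nat -> phi (grp sy k) (hvir sy k j) <= Sg phi.
Proof. intros Hp Hk Hf Hj. unfold Sg.
  eapply Rle_trans; [|apply (sumR_term _ _ k Hk)]; cbv beta. rewrite Hf.
  destruct j; [lia|]. apply (sumR_term _ (fun j => phi (grp sy k) (hvir sy k (S j))) j); auto. lia.
  intros k' Hk'. destruct (fb sy k'); [auto|apply sumR_ge0; auto]. Qed.

Lemma interf_add xs d t g h :
  interf sy (pQ (padd xs (pscale t d))) g h = interf sy (pQ xs) g h + t * interf sy (pQ d) g h.
Proof. unfold interf. rewrite <- sumR_scal, <- sumR_plus. apply sumR_ext; intros.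
  destruct Nat.eqb; [ring|]. rewrite !trQhh_lin. simpl. apply lin_add. Qed.

Definition K2 (h : Vec) : R := INR (nG sy) * (INR (nN sy) * (INR (nN sy) * Kw (nN sy) (hw h))).

Lemma interf_close p q e g h : pt_close sy p q e ->
  Rabs (interf sy (pQ p) g h - interf sy (pQ q) g h) <= K2 h * e.
Proof. intros Hc. pose proof (close_pos _ _ _ _ Hc). unfold K2.
  replace (INR (nG sy) * (INR (nN sy) * (INR (nN sy) * Kw (nN sy) (hw h))) * e) with
    (INR (nG sy) * (INR (nN sy) * (INR (nN sy) * (e * Kw (nN sy) (hw h))))) by ring.
  apply sumR_diff_bound. intros l Hl. destruct Nat.eqb.
  - rewrite Rminus_0_r, Rabs_R0. pose proof (pos_INR (nN sy)). pose proof (Kw_ge0 (nN sy) (hw h)).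
    repeat apply Rmult_le_pos; lra.
  - apply tr_close. apply (closeQ sy _ _ _ l Hc Hl). Qed.

Lemma rate_real rho_p rb s R lam id E : 0 <= rho_p -> rho_p + id * (1 - s) >= R ->
  rho_p - rb <= E -> E <= lam * id -> 0 <= lam <= 1 ->
  rb + id * (1 - (1 - lam) * s) >= (1 - lam) * R.
Proof. intros. assert (0 <= (1 - lam) * (rho_p + id * (1 - s) - R)) by (apply Rmult_le_pos; lra).
  assert (0 <= lam * rho_p) by (apply Rmult_le_pos; lra). nra. Qed.

End P7.

Theorem proposition2 (sy : Sys) (Qt0 : nat -> Mat) (x : nat -> Pt) (xs : Pt) :
  sys_ok sy ->
  InQset sy Qt0 ->
  CVX_opt sy Qt0 (x 0%nat) ->
  (forall n, CVX_opt sy (pQ (x n)) (x (S n))) ->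
  limit_point sy x xs ->
  stationary sy xs.
Proof.
  intros Hs HQ0 Hx0 Hstep Hlim. rename x into xq.
  assert (HQn : forall n, InQset sy (pQ (xq n))).
  { intros [|n]; [apply (proj1 (proj1 Hx0))|apply (proj1 (proj1 (Hstep n)))]. }
  assert (Hrpf : forall n, RPF_feas sy (xq n)).
  { intros [|n]. apply (cvx_to_rpf sy Qt0); auto. apply Hx0.
    apply (cvx_to_rpf sy (pQ (xq n))); auto. apply Hstep. }
  assert (Hmono : forall n, pA (xq n) <= pA (xq (S n))).
  { intros n. apply (proj2 (Hstep n)). apply rpf_to_cvx; auto. }
  assert (Hmono2 : forall m n, (m <= n)%nat -> pA (xq m) <= pA (xq n)).
  { intros m n Hmn. induction Hmn; [lra|]. pose proof (Hmono m0); lra. }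
  assert (Hbound : forall m, pA (xq m) <= pA xs).
  { intros m. destruct (Rle_or_lt (pA (xq m)) (pA xs)) as [|Hc]; auto.
    destruct (Hlim ((pA (xq m) - pA xs)/2) ltac:(lra) m) as [n [Hn Cn]].
    pose proof (Hmono2 m n Hn). destruct Cn as [_ [_ [_ [_ Ca]]]].
    apply abs_le_e, abs_between in Ca. lra. }
  assert (Hlim' : forall e, 0 < e -> exists p, RPF_feas sy p /\ pt_close sy p xs e).
  { intros e He. destruct (Hlim e He 0%nat) as [n [_ Cn]]. exists (xq n); auto. }
  pose proof (lim_feas sy xs Hs Hlim') as Fxs.
  split; auto. intros d [eps0 [He0 Hfd]] l Hl.
  destruct (Rle_or_lt l 0) as [|Hl0]; auto. exfalso.
  destruct (Hl (l/2) ltac:(lra)) as [eta [Heta Hd]].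
  specialize (Hd (eta/2) ltac:(lra)). unfold objective in Hd. simpl in Hd.
  replace ((pA xs + eta / 2 * pA d - pA xs) / (eta / 2)) with (pA d) in Hd by (field; lra).
  apply abs_le_e, abs_between in Hd.
  remember (pA d) as a eqn:Ea. assert (Ha : 0 < a) by lra.
  remember (pA xs) as als eqn:Eals.
  pose proof Hs as [Hdel _]. pose proof ln2_pos.
  remember (delta sy / ln 2) as q eqn:Eqq.
  assert (Hq : 0 < q) by (rewrite Eqq; apply Rdiv_lt_0_compat; lra).
  remember (Sg sy (fun g h => (interf sy (pQ d) g h) ^ 2)) as S1 eqn:ES1.
  remember (Sg sy (fun g h => (K2 sy h) ^ 2)) as S2 eqn:ES2.
  assert (HS1 : 0 <= S1).
  { rewrite ES1; unfold  Sg. apply sumR_ge0; intros. destruct fb. apply pow2_ge_0. apply sumR_ge0; intros; apply pow2_ge_0. }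
  assert (HS2 : 0 <= S2).
  { rewrite ES2; unfold  Sg. apply sumR_ge0; intros. destruct fb. apply pow2_ge_0. apply sumR_ge0; intros; apply pow2_ge_0. }
  remember (Rabs als + a) as M eqn:EM.
  assert (HM : 0 < M) by (pose proof (Rabs_pos als); rewrite EM; lra).
  remember (4 * q * (S1 + 1) * (M + 1)) as P1 eqn:EP1.
  assert (HP1 : 0 < P1) by (rewrite EP1; repeat apply Rmult_lt_0_compat; lra).
  remember (Rmin eps0 (Rmin 1 (a / P1))) as t eqn:Et.
  assert (Ht0 : 0 < t).
  { rewrite Et. apply Rmin_glb_lt; auto. apply Rmin_glb_lt; [lra|]. apply Rdiv_lt_0_compat; auto. }
  assert (Hte : t <= eps0) by (rewrite Et; apply Rmin_l).
  assert (Ht1 : t <= 1) by (rewrite Et; eapply Rle_trans; [apply Rmin_r|apply Rmin_l]).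
  assert (HtP : t * P1 <= a).
  { assert (t <= a / P1) by (rewrite Et; eapply Rle_trans; [apply Rmin_r|apply Rmin_r]).
    apply Rmult_le_compat_r with (r := P1) in H0; [|lra].
    unfold Rdiv in H0. rewrite Rmult_assoc, Rinv_l in H0 by lra. lra. }
  remember (8 * q * (S2 + 1) * (M + 1)) as P2 eqn:EP2.
  assert (HP2 : 0 < P2) by (rewrite EP2; repeat apply Rmult_lt_0_compat; lra).
  remember (Rmin 1 (t * a / P2)) as eps eqn:Eeps.
  assert (He : 0 < eps).
  { rewrite Eeps. apply Rmin_glb_lt; [lra|]. apply Rdiv_lt_0_compat; auto. apply Rmult_lt_0_compat; auto. }
  assert (He1 : eps <= 1) by (rewrite Eeps; apply Rmin_l).
  assert (HeP : eps * P2 <= t * a).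
  { assert (eps <= t * a / P2) by (rewrite Eeps; apply Rmin_r).
    apply Rmult_le_compat_r with (r := P2) in H0; [|lra].
    unfold Rdiv in H0. rewrite Rmult_assoc, Rinv_l in H0 by lra. lra. }
  remember (2 * q * (t * t * S1 + eps * eps * S2)) as lam eqn:Elam.
  assert (Hlam0 : 0 <= lam).
  { rewrite Elam. assert (0 <= t * t * S1 + eps * eps * S2) by (pose proof (Rmult_le_pos (t*t) S1); pose proof (Rmult_le_pos (eps*eps) S2); nra). nra. }
  assert (A1 : 2 * q * (t * t * S1) * (M + 1) <= t * a / 2).
  { assert (t * (t * P1) / 2 - 2 * q * (t * t * S1) * (M + 1) = 2 * q * (t * t) * (M + 1)) by (rewrite EP1; field).
    assert (0 <= 2 * q * (t * t) * (M + 1)) by (repeat apply Rmult_le_pos; nra).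
    assert (t * (t * P1) <= t * a) by (apply Rmult_le_compat_l; lra). lra. }
  assert (A2 : 2 * q * (eps * eps * S2) * (M + 1) <= t * a / 4).
  { assert (eps * (eps * P2) / 4 - 2 * q * (eps * eps * S2) * (M + 1) = 2 * q * (eps * eps) * (M + 1)) by (rewrite EP2; field).
    assert (0 <= 2 * q * (eps * eps) * (M + 1)) by (repeat apply Rmult_le_pos; nra).
    assert (eps * (eps * P2) <= eps * (t * a)) by (apply Rmult_le_compat_l; lra).
    assert (eps * (t * a) <= t * a) by (assert (0 <= t * a) by nra; nra). lra. }
  assert (Hlam : lam * (M + 1) <= 3 / 4 * (t * a)) by (rewrite Elam; lra).
  assert (Hlam1 : lam <= 1).
  { destruct (Rle_or_lt lam 1); auto.
    assert (t * a <= M + 1) by (rewrite EM; pose proof (Rabs_pos als); nra). nra. }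
  assert (Fp : RPF_feas sy (padd xs (pscale t d))) by (apply Hfd; lra).
  remember (padd xs (pscale t d)) as p eqn:Ep.
  destruct (Hlim eps He 0%nat) as [n [_ Cn]].
  assert (HK2 : forall h, 0 <= K2 sy h).
  { intros h. unfold K2. pose proof (pos_INR (nG sy)). pose proof (pos_INR (nN sy)).
    pose proof (Kw_ge0 (nN sy) (hw h)). repeat apply Rmult_le_pos; auto. }
  assert (HE : forall g h, (g < nG sy)%nat -> (interf sy (pQ d) g h) ^ 2 <= S1 -> (K2 sy h) ^ 2 <= S2 ->
    rho sy g h (pQ p) - rhobar sy g h (pQ p) (pQ (xq n)) <= lam * / delta sy).
  { intros g h Hg HD HK.
    pose proof (rate_gap sy g h (pQ p) (pQ (xq n)) Hg (Qset_nonneg _ _ _ (proj1 Fp)) (Qset_nonneg _ _ _ (HQn n))) as [_ G].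
    assert (Ip : interf sy (pQ p) g h = interf sy (pQ xs) g h + t * interf sy (pQ d) g h) by (rewrite Ep; apply interf_add).
    pose proof (interf_close sy _ _ _ g h Cn) as IC. apply abs_between in IC.
    rewrite Ip in G.
    remember (interf sy (pQ d) g h) as D eqn:ED.
    remember (interf sy (pQ xs) g h - interf sy (pQ (xq n)) g h) as e' eqn:Ee'.
    replace (interf sy (pQ xs) g h + t * D - interf sy (pQ (xq n)) g h) with (t * D + e') in G by (rewrite Ee'; ring).
    remember (K2 sy h) as c eqn:Ec. pose proof (HK2 h) as Hc. rewrite <- Ec in Hc.
    assert (Hc2 : e' ^ 2 <= (c * eps) ^ 2).
    { assert (0 <= (c * eps - e') * (c * eps + e')) by (apply Rmult_le_pos; lra). nra. }
    assert (Hc3 : (c * eps) ^ 2 <= eps * eps * S2).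
    { replace ((c * eps) ^ 2) with (eps * eps * c ^ 2) by ring. apply Rmult_le_compat_l; nra. }
    assert (Hc4 : (t * D) ^ 2 <= t * t * S1).
    { replace ((t * D) ^ 2) with (t * t * D ^ 2) by ring. apply Rmult_le_compat_l; nra. }
    assert (Hsq : (t * D + e') ^ 2 <= 2 * (t * t * S1 + eps * eps * S2)).
    { pose proof (pow2_ge_0 (t * D - e')). nra. }
    assert (Hl' : lam * / delta sy = 2 * (t * t * S1 + eps * eps * S2) / ln 2).
    { rewrite Elam, Eqq. field. lra. }
    rewrite Hl'. eapply Rle_trans; [exact G|]. unfold Rdiv. apply Rmult_le_compat_r; auto.
    left; apply Rinv_0_lt_compat; lra. }
  rewrite ES1, ES2 in HE.
  set (y := mkPt (pQ p) (fun g => (1 - lam) * pR p g) (fun k => (1 - lam) * pS p k)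
                 (fun k j => (1 - lam) * pT p k j) ((1 - lam) * pA p)).
  assert (Fy : CVX_feas sy (pQ (xq n)) y).
  { destruct Fp as [FQ [F2 [F3 [F4 [F5 F6]]]]].
    pose proof Hs as [_ [_ [_ [_ [Hgrp _]]]]].
    split; [exact FQ|]. split; [|split; [|split; [|split]]].
    - intros g Hg u v. specialize (F2 g Hg u v).
      assert (Efb : sum_fb sy y g = (1 - lam) * sum_fb sy p g).
      { unfold sum_fb. rewrite <- sumR_scal. apply sumR_ext; intros. simpl. destruct (andb _ _); ring. }
      assert (Evir : sum_vir sy y g = (1 - lam) * sum_vir sy p g).
      { unfold sum_vir. rewrite <- sumR_scal. apply sumR_ext; intros. destruct (andb _ _); [|ring].
        rewrite <- sumR_scal. apply sumR_ext; intros. simpl. ring. }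
      rewrite Efb, Evir. simpl.
      assert (0 <= (1 - lam) * (u * u * pR p g + 2 * u * v * (pA p * sqrt (tau sy g * INR (card_grp sy g))) +
         v * v * (sum_fb sy p g + / INR (nJ sy) * sum_vir sy p g))) as HH by (apply Rmult_le_pos; lra).
      match goal with |- 0 <= ?E => replace E with ((1 - lam) * (u * u * pR p g + 2 * u * v * (pA p * sqrt (tau sy g * INR (card_grp sy g))) +
         v * v * (sum_fb sy p g + / INR (nJ sy) * sum_vir sy p g))) by ring end. exact HH.
    - intros k Hk Hf. simpl.
      pose proof (F3 k Hk Hf). pose proof (F5 k Hk Hf).
      pose proof (rho_ge0 sy (grp sy k) (hch sy k) (pQ p) (Hgrp k Hk) (Qset_nonneg _ _ _ FQ)).
      pose proof (HE (grp sy k) (hch sy k) (Hgrp k Hk)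
        (Sg_fb sy (fun g h => (interf sy (pQ d) g h) ^ 2) k (fun g h => pow2_ge_0 _) Hk Hf)
        (Sg_fb sy (fun g h => (K2 sy h) ^ 2) k (fun g h => pow2_ge_0 _) Hk Hf)).
      eapply rate_real; eauto; lra.
    - intros k j Hk Hf Hj. simpl.
      pose proof (F4 k j Hk Hf Hj). pose proof (F6 k j Hk Hf Hj).
      pose proof (rho_ge0 sy (grp sy k) (hvir sy k j) (pQ p) (Hgrp k Hk) (Qset_nonneg _ _ _ FQ)).
      pose proof (HE (grp sy k) (hvir sy k j) (Hgrp k Hk)
        (Sg_vir sy (fun g h => (interf sy (pQ d) g h) ^ 2) k j (fun g h => pow2_ge_0 _) Hk Hf Hj)
        (Sg_vir sy (fun g h => (K2 sy h) ^ 2) k j (fun g h => pow2_ge_0 _) Hk Hf Hj)).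
      eapply rate_real; eauto; lra.
    - intros k Hk Hf. simpl. pose proof (F5 k Hk Hf). split; nra.
    - intros k j Hk Hf Hj. simpl. pose proof (F6 k j Hk Hf Hj). split; nra. }
  pose proof (proj2 (Hstep n) y Fy) as Hy.
  pose proof (Hbound (S n)).
  assert (EpA : pA y = (1 - lam) * (als + t * a)) by (unfold y; rewrite Ep; simpl; rewrite Eals, Ea; ring).
  assert (Hab : als + t * a <= M) by (rewrite EM; pose proof (Rle_abs als); nra).
  assert (lam * (als + t * a) <= lam * M) by (apply Rmult_le_compat_l; lra).
  assert (0 < t * a) by nra.
  rewrite EpA in Hy. nra.
Qed.
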